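(* Let $N\ge1$ and let $(A_N,H_N,D_N)$ be the fuzzy sphere spectral triple described in the context, with space of two-forms $\Omega^2(A_N)=\mathcal{S}/J^2$. Then $$\Omega^2(A_N)=\{X\otimes_{\mathbb{C}}\sigma_1\sigma_2+Y\otimes_{\mathbb{C}}\sigma_2\sigma_3+Z\otimes_{\mathbb{C}}\sigma_1\sigma_3:\ X,Y,Z\in A_N\},$$ in the sense that the quotient map $\mathcal{S}\to\Omega^2(A_N)$ restricts to a bijection from this subspace of $A_N\otimes_{\mathbb{C}}M_2(\mathbb{C})$ onto $\Omega^2(A_N)$.
   Context: Let $J_1,J_2,J_3$ be a basis of $su(2)$ with $[J_k,J_l]=\sum_m\epsilon_{klm}J_m$ ($\epsilon_{123}=1$). $\rho_{n/2}$ is the $(n+1)$-dimensional irreducible unitary representation of $su(2)$. $K_N=\oplus_{n=0}^N\mathbb{C}^{n+1}$, $X_k=\oplus_{n=0}^N\rho_{n/2}(J_k)$, $A_N=B(K_N)$, $H_N=K_N\otimes\mathbb{C}^2$ with $a\mapsto a\otimes1$; $\tau_k$ the Pauli matrices, $\sigma_k=\sqrt{-1}\tau_k$, $D_N=\sum_kX_k\otimes\sigma_k$; $B(H_N)=A_N\otimes M_2(\mathbb{C})$. The differential calculus of the spectral triple: $\Omega^1(A_N)=\{\sum_ja_j[D_N,b_j]\}$, $\mathcal{S}$ is the linear span of all products $a_0[D_N,a_1][D_N,a_2]$ ($a_i\in A_N$), $J^2=\{\sum_j[D_N,a_j][D_N,b_j]:\sum_ja_j[D_N,b_j]=0\}$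 (junk forms), and $\Omega^2(A_N)=\mathcal{S}/J^2$. *)

(* Defs.v *)
From HB Require Import structures.
From mathcomp Require Import all_boot all_order all_algebra.
From mathcomp Require Export mxtens.
Set Implicit Arguments. Unset Strict Implicit. Unset Printing Implicit Defensive.
Import Order.TTheory GRing.Theory Num.Theory.
Local Open Scope ring_scope.

Section FuzzySphere.
Variable C : numClosedFieldType.

(* Spin-s matrices (s = n/2), basis index a = 0..n, |s, m> with m = s - a.
   sx, sy, sz are Hermitian with [sx,sy] = i sz (cyclically). *)
Definition spin_coef (n i j : nat) : C :=
  sqrtC ((maxn i j)%:R * (n.+1 - maxn i j)%:R).

Definition spin_x (n : nat) : 'M[C]_(n.+1) :=
  \matrix_(i, j) (if (i.+1 == j :> nat) || (j.+1 == i :> nat)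
                  then spin_coef n i j / 2%:R else 0).

Definition spin_y (n : nat) : 'M[C]_(n.+1) :=
  \matrix_(i, j) (if i.+1 == j :> nat then - 'i * spin_coef n i j / 2%:R
                  else if j.+1 == i :> nat then 'i * spin_coef n i j / 2%:R
                  else 0).

Definition spin_z (n : nat) : 'M[C]_(n.+1) :=
  \matrix_(i, j) (if i == j then (n%:R / 2%:R) - (i : nat)%:R else 0).

(* rho_{n/2}(J_k) = - i S_k : anti-Hermitian, and
   [rho(J_k), rho(J_l)] = sum_m eps_{klm} rho(J_m). *)
Definition rho (n : nat) (k : 'I_3) : 'M[C]_(n.+1) :=
  - 'i *: (if k == 0 :> nat then spin_x n
           else if k == 1 :> nat then spin_y n else spin_z n).

Definition dimK (N : nat) : nat := \sum_(n < N.+1) (n : nat).+1.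

Definition Xop (N : nat) (k : 'I_3) : 'M[C]_(dimK N) :=
  \mxdiag_(n < N.+1) rho n k.

Definition tau (k : 'I_3) : 'M[C]_2 :=
  if k == 0 :> nat then \matrix_(i, j) (if i == j then 0 else 1)
  else if k == 1 :> nat then
    \matrix_(i, j) (if i == j then 0 else if (i : nat) == 0 then - 'i else 'i)
  else \matrix_(i, j) (if i == j then (if (i : nat) == 0 then 1 else -1) else 0).

Definition sigma (k : 'I_3) : 'M[C]_2 := 'i *: tau k.

(* B(H_N) = A_N (x) M_2(C), H_N = K_N (x) C^2 *)
Definition BH (N : nat) := 'M[C]_(dimK N * 2).

Definition Dop (N : nat) : BH N := \sum_(k < 3) (Xop N k *t sigma k).

(* the representation a |-> a (x) 1 of A_N = B(K_N) on H_N *)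
Definition emb (N : nat) (a : 'M[C]_(dimK N)) : BH N := a *t (1%:M : 'M[C]_2).

Definition commD (N : nat) (a : 'M[C]_(dimK N)) : BH N :=
  Dop N *m emb a - emb a *m Dop N.

(* S = linear span of a0 [D,a1][D,a2]  (scalars are absorbed in a0) *)
Definition in_S (N : nat) (M : BH N) : Prop :=
  exists (m : nat) (a0 a1 a2 : 'I_m -> 'M[C]_(dimK N)),
    M = \sum_(i < m) (emb (a0 i) *m commD (a1 i) *m commD (a2 i)).

Definition in_J2 (N : nat) (M : BH N) : Prop :=
  exists (m : nat) (a b : 'I_m -> 'M[C]_(dimK N)),
    \sum_(i < m) (emb (a i) *m commD (b i)) = 0 /\
    M = \sum_(i < m) (commD (a i) *m commD (b i)).

Definition in_V (N : nat) (M : BH N) : Prop :=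
  exists X Y Z : 'M[C]_(dimK N),
    M = X *t (sigma 0 *m sigma 1) + Y *t (sigma 1 *m sigma 2)
        + Z *t (sigma 0 *m sigma 2).

End FuzzySphere.

(* Main.v *)
Require Import Defs.
From HB Require Import structures.
From mathcomp Require Import all_boot all_order all_algebra.
From mathcomp Require Import ring zify.
Set Implicit Arguments. Unset Strict Implicit. Unset Printing Implicit Defensive.
Import Order.TTheory GRing.Theory Num.Theory.
Local Open Scope ring_scope.

Section Spin.
Variable C : numClosedFieldType.

Lemma sum_if_eq m (F : nat -> C) k :
  \sum_(l < m) (if (l : nat) == k then F l else 0) = if (k < m)%N then F k else 0.
Proof.
elim: m => [|m IH]; first by rewrite big_ord0.
rewrite big_ord_recr /= IH.
case: (ltngtP k m) => h.
- by rewrite (ltn_trans h (ltnSn _)) addr0.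
- by rewrite ltnS leqNgt h addr0.
- by subst; rewrite ltnSn add0r.
Qed.

Lemma sum_if_eqc m (c : C) k :
  \sum_(l < m) (if (l : nat) == k then c else 0) = if (k < m)%N then c else 0.
Proof. exact: (sum_if_eq m (fun _ => c) k). Qed.

Definition cc (n k : nat) : C := sqrtC (k%:R * (n.+1 - k)%:R).
Definition Sp n : 'M[C]_(n.+1) :=
  \matrix_(i, j) (if (i : nat).+1 == j then cc n j else 0).
Definition Sm n : 'M[C]_(n.+1) :=
  \matrix_(i, j) (if (j : nat).+1 == i then cc n i else 0).

Lemma cc2 n k : cc n k * cc n k = k%:R * (n.+1 - k)%:R.
Proof. by rewrite /cc -expr2 sqrtCK. Qed.

Lemma ZP n : spin_z C n *m Sp n - Sp n *m spin_z C n = Sp n.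
Proof.
apply/matrixP => i j; rewrite !mxE.
have -> : \sum_l spin_z C n i l * Sp n l j = \sum_(l < n.+1) (if (l:nat) == i then
   (n%:R / 2%:R - (i:nat)%:R) * Sp n i j else 0).
  apply: eq_bigr => l _; rewrite !mxE; case: (eqVneq (l:nat) i) => [/val_inj ->|h].
    by rewrite !eqxx.
  have h' : (i == l) = false by apply/negbTE; rewrite -val_eqE eq_sym.
  by rewrite h' mul0r.
have -> : \sum_l Sp n i l * spin_z C n l j = \sum_(l < n.+1) (if (l:nat) == j then
   Sp n i j * (n%:R / 2%:R - (j:nat)%:R) else 0).
  apply: eq_bigr => l _; rewrite !mxE; case: (eqVneq (l:nat) j) => [/val_inj ->|h].
    by rewrite !eqxx.
  have h' : (l == j) = false by apply/negbTE; rewrite -val_eqE.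
  by rewrite h' mulr0.
rewrite !sum_if_eqc !ltn_ord !mxE.
case: eqP => [h|_]; last by rewrite !mulr0 mul0r subrr.
rewrite -h -addn1 natrD; ring.
Qed.

Lemma ZM n : spin_z C n *m Sm n - Sm n *m spin_z C n = - Sm n.
Proof.
apply/matrixP => i j; rewrite !mxE.
have -> : \sum_l spin_z C n i l * Sm n l j = \sum_(l < n.+1) (if (l:nat) == i then
   (n%:R / 2%:R - (i:nat)%:R) * Sm n i j else 0).
  apply: eq_bigr => l _; rewrite !mxE; case: (eqVneq (l:nat) i) => [/val_inj ->|h].
    by rewrite !eqxx.
  have h' : (i == l) = false by apply/negbTE; rewrite -val_eqE eq_sym.
  by rewrite h' mul0r.
have -> : \sum_l Sm n i l * spin_z C n l j = \sum_(l < n.+1) (if (l:nat) == j then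
   Sm n i j * (n%:R / 2%:R - (j:nat)%:R) else 0).
  apply: eq_bigr => l _; rewrite !mxE; case: (eqVneq (l:nat) j) => [/val_inj ->|h].
    by rewrite !eqxx.
  have h' : (l == j) = false by apply/negbTE; rewrite -val_eqE.
  by rewrite h' mulr0.
rewrite !sum_if_eqc !ltn_ord !mxE.
case: eqP => [h|_]; last by rewrite !mulr0 mul0r subrr oppr0.
rewrite -h -addn1 natrD; ring.
Qed.

Lemma sum_if_eqS m (c : C) k :
  \sum_(l < m) (if (l : nat).+1 == k then c else 0) =
   if (0 < k <= m)%N then c else 0.
Proof.
case: k => [|k].
  by rewrite big1 // => l _.
by under eq_bigr do rewrite eqSS; rewrite sum_if_eqc.
Qed.

Lemma PM n : Sp n *m Sm n - Sm n *m Sp n = 2%:R *: spin_z C n.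
Proof.
apply/matrixP => i j; rewrite !mxE.
have -> : \sum_l Sp n i l * Sm n l j = \sum_(l < n.+1) (if (l:nat) == i.+1 then
   (if i == j then cc n i.+1 * cc n i.+1 else 0) else 0).
  apply: eq_bigr => l _; rewrite !mxE eq_sym; case: eqP => [hl|]; last by rewrite mul0r.
  rewrite hl eqSS; case: (eqVneq i j) => [->|h]; first by rewrite eqxx.
  by rewrite val_eqE eq_sym (negPf h) mulr0.
have -> : \sum_l Sm n i l * Sp n l j = \sum_(l < n.+1) (if (l:nat).+1 == i then
   (if i == j then cc n i * cc n i else 0) else 0).
  apply: eq_bigr => l _; rewrite !mxE; case: eqP => [hl|]; last by rewrite mul0r.
  rewrite hl; case: (eqVneq i j) => [->|h]; first by rewrite eqxx.
  by rewrite val_eqE (negPf h) mulr0.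
rewrite sum_if_eqc sum_if_eqS ltnS (ltnW (ltn_ord i)) andbT.
case: (eqVneq i j) => [->|h]; last by rewrite !if_same mulr0 subrr.
rewrite !cc2.
have hi := ltn_ord j; rewrite ltnS in hi.
have e1 : (if (j < n)%N then (j.+1)%:R * (n.+1 - j.+1)%:R else 0) =
   (j.+1)%:R * (n - j)%:R :> C.
  case: ltnP => h; first by rewrite subSS.
  have -> : (j:nat) = n by apply/eqP; rewrite eqn_leq hi h.
  by rewrite subnn mulr0.
have e2 : (if (0 < j)%N then (j:nat)%:R * (n.+1 - j)%:R else 0) =
   (j:nat)%:R * (n.+1 - j)%:R :> C.
  by case: (j:nat) => [|k] //=; rewrite mul0r.
rewrite e1 e2 !natrB ?(leq_trans hi) // -addn1 !natrD.
by field.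
Qed.

Lemma L1 m (P M Z : 'M[C]_m) (a b : C) :
  P *m M - M *m P = 2%:R *: Z ->
  (a *: (P + M)) *m (b *: (P - M)) - (b *: (P - M)) *m (a *: (P + M))
  = (- (4%:R * a * b)) *: Z.
Proof.
move=> h3; have h3' : P *m M = 2%:R *: Z + M *m P by apply/eqP; rewrite -subr_eq h3.
rewrite !(mulmxDl, mulmxDr, mulmxBl, mulmxBr, mulmxN, mulNmx, =^~scalemxAl, =^~scalemxAr) h3'.
move: (P *m P) (M *m P) (M *m M) => PP MP MM.
apply/matrixP => i j; rewrite !mxE; ring.
Qed.

Lemma L2 m (P M Z : 'M[C]_m) (b c : C) :
  Z *m P - P *m Z = P -> Z *m M - M *m Z = - M ->
  (b *: (P - M)) *m (c *: Z) - (c *: Z) *m (b *: (P - M))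
  = (- (b * c)) *: (P + M).
Proof.
move=> h1 h2.
have h1' : Z *m P = P + P *m Z by apply/eqP; rewrite -subr_eq h1.
have h2' : Z *m M = - M + M *m Z by apply/eqP; rewrite -subr_eq h2.
rewrite !(mulmxDl, mulmxDr, mulmxBl, mulmxBr, mulmxN, mulNmx, =^~scalemxAl, =^~scalemxAr) h1' h2'.
move: (P *m Z) (M *m Z) => PZ MZ.
apply/matrixP => i j; rewrite !mxE; ring.
Qed.

Lemma L3 m (P M Z : 'M[C]_m) (a c : C) :
  Z *m P - P *m Z = P -> Z *m M - M *m Z = - M ->
  (c *: Z) *m (a *: (P + M)) - (a *: (P + M)) *m (c *: Z)
  = (c * a) *: (P - M).
Proof.
move=> h1 h2.
have h1' : Z *m P = P + P *m Z by apply/eqP; rewrite -subr_eq h1.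
have h2' : Z *m M = - M + M *m Z by apply/eqP; rewrite -subr_eq h2.
rewrite !(mulmxDl, mulmxDr, mulmxBl, mulmxBr, mulmxN, mulNmx, =^~scalemxAl, =^~scalemxAr) h1' h2'.
move: (P *m Z) (M *m Z) => PZ MZ.
apply/matrixP => i j; rewrite !mxE; ring.
Qed.

Lemma spin_xE n : spin_x C n = (2%:R^-1 : C) *: (Sp n + Sm n).
Proof.
apply/matrixP => i j; rewrite !mxE /spin_coef.
case: (eqVneq (i:nat).+1 j) => [h|h] /=.
  have -> : (j:nat).+1 == i = false by apply/negbTE; rewrite -h; lia.
  by rewrite -h (maxn_idPr (leqnSn _)) addr0 mulrC.
case: (eqVneq (j:nat).+1 i) => [h'|h'] /=; last by rewrite addr0 mulr0.
by rewrite -h' (maxn_idPl (leqnSn _)) add0r mulrC.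
Qed.

Lemma spin_yE n : spin_y C n = (- 'i / 2%:R) *: Sp n + ('i / 2%:R) *: Sm n.
Proof.
apply/matrixP => i j; rewrite !mxE /spin_coef.
case: (eqVneq (i:nat).+1 j) => [h|h] /=.
  have -> : (j:nat).+1 == i = false by apply/negbTE; rewrite -h; lia.
  rewrite -h (maxn_idPr (leqnSn _)) mulr0 addr0 /cc; ring.
case: (eqVneq (j:nat).+1 i) => [h'|h'] /=; last by rewrite !mulr0 addr0.
rewrite -h' (maxn_idPl (leqnSn _)) mulr0 add0r /cc; ring.
Qed.

Definition k0 : 'I_3 := @Ordinal 3 0 isT.
Definition k1 : 'I_3 := @Ordinal 3 1 isT.
Definition k2 : 'I_3 := @Ordinal 3 2 isT.

Lemma hi : 'i * 'i = -1 :> C.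
Proof. by rewrite -expr2 sqrCi. Qed.

Lemma rho0E n : rho C n k0 = (- 'i / 2%:R) *: (Sp n + Sm n).
Proof. by rewrite /rho /= spin_xE scalerA. Qed.

Lemma rho1E n : rho C n k1 = (- 'i * (- 'i / 2%:R)) *: (Sp n - Sm n).
Proof.
rewrite /rho /= spin_yE scalerDr !scalerA scalerBr; congr (_ + _).
by rewrite -scaleNr; congr (_ *: _); ring.
Qed.

Lemma rho2E n : rho C n k2 = (- 'i) *: spin_z C n.
Proof. by []. Qed.

Lemma rho01 n : rho C n k0 *m rho C n k1 - rho C n k1 *m rho C n k0 = rho C n k2.
Proof.
rewrite rho0E rho1E rho2E (L1 _ _ (PM n)); congr (_ *: _).
have -> : - (4%:R * (- 'i / 2%:R) * (- 'i * (- 'i / 2%:R))) = ('i * 'i) * 'i :> C by field.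
by rewrite hi mulN1r.
Qed.

Lemma rho12 n : rho C n k1 *m rho C n k2 - rho C n k2 *m rho C n k1 = rho C n k0.
Proof.
rewrite rho0E rho1E rho2E (L2 _ _ (ZP n) (ZM n)); congr (_ *: _).
have -> : - ((- 'i * (- 'i / 2%:R)) * - 'i) = ('i * 'i) * ('i / 2%:R) :> C by field.
by rewrite hi mulN1r mulNr.
Qed.

Lemma rho20 n : rho C n k2 *m rho C n k0 - rho C n k0 *m rho C n k2 = rho C n k1.
Proof.
rewrite rho0E rho1E rho2E (L3 _ _ (ZP n) (ZM n)); congr (_ *: _); ring.
Qed.
End Spin.
Section X.
Variable C : numClosedFieldType.

Lemma mul_mxdiag (p : nat) (p_ : 'I_p -> nat) (A B : forall i, 'M[C]_(p_ i)) :
  \mxdiag_i A i *m \mxdiag_i B i = \mxdiag_i (A i *m B i).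
Proof.
rewrite {2}/mxdiag mul_mxdiag_mxblock /mxdiag; apply/eq_mxblock => i j.
by case: eqVneq => [->|]; rewrite ?conform_mx_id ?mulmx0.
Qed.

Variable N : nat.
Local Notation X := (Xop C N).

Lemma XLie01 : X k0 *m X k1 - X k1 *m X k0 = X k2.
Proof. by rewrite /Xop !mul_mxdiag -mxdiagB; apply: eq_mxdiag => i; exact: rho01. Qed.
Lemma XLie12 : X k1 *m X k2 - X k2 *m X k1 = X k0.
Proof. by rewrite /Xop !mul_mxdiag -mxdiagB; apply: eq_mxdiag => i; exact: rho12. Qed.
Lemma XLie20 : X k2 *m X k0 - X k0 *m X k2 = X k1.
Proof. by rewrite /Xop !mul_mxdiag -mxdiagB; apply: eq_mxdiag => i; exact: rho20. Qed.

Lemma mxtraceB (m : nat) (A B : 'M[C]_m) : \tr (A - B) = \tr A - \tr B.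
Proof. exact: raddfB. Qed.

Lemma trcomm (m : nat) (A B : 'M[C]_m) : \tr (A *m B - B *m A) = 0.
Proof. by rewrite mxtraceB mxtrace_mulC subrr. Qed.

Lemma trX0 : \tr (X k0) = 0. Proof. by rewrite -XLie12 trcomm. Qed.
Lemma trX1 : \tr (X k1) = 0. Proof. by rewrite -XLie20 trcomm. Qed.
Lemma trX2 : \tr (X k2) = 0. Proof. by rewrite -XLie01 trcomm. Qed.

Lemma cyc (m : nat) (A B D : 'M[C]_m) : \tr (A *m (B *m D)) = \tr (B *m (D *m A)).
Proof. by rewrite mxtrace_mulC mulmxA. Qed.

End X.
Section Abs.
Variable C : numClosedFieldType.
Variable m : nat.
Variables A0 A1 A2 : 'M[C]_m.
Hypothesis H01 : A0 *m A1 - A1 *m A0 = A2.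
Hypothesis H12 : A1 *m A2 - A2 *m A1 = A0.
Hypothesis H20 : A2 *m A0 - A0 *m A2 = A1.

Lemma mxtraceB' (A B : 'M[C]_m) : \tr (A - B) = \tr A - \tr B.
Proof. exact: raddfB. Qed.

Lemma cyc' (A B D : 'M[C]_m) : \tr (A *m (B *m D)) = \tr (B *m (D *m A)).
Proof. by rewrite mxtrace_mulC mulmxA. Qed.

Lemma tr_sq_eq_abs : \tr (A0 *m A0) = \tr (A2 *m A2) /\
                 \tr (A1 *m A1) = \tr (A2 *m A2).
Proof.
have E2 : \tr (A2 *m A2) = \tr (A0 *m (A1 *m A2)) - \tr (A2 *m (A1 *m A0)).
  by rewrite -{2}H01 mulmxBr mxtraceB' (mxtrace_mulC A2) -mulmxA.
have E0 : \tr (A0 *m A0) = \tr (A0 *m (A1 *m A2)) - \tr (A2 *m (A1 *m A0)).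
  by rewrite -{2}H12 mulmxBr mxtraceB' (cyc' A0 A2).
have E1 : \tr (A1 *m A1) = \tr (A0 *m (A1 *m A2)) - \tr (A2 *m (A1 *m A0)).
  by rewrite -{2}H20 mulmxBr mxtraceB' (cyc' A1 A2) (cyc' A2 A0) (cyc' A1 A0) (cyc' A0 A2).
by rewrite E0 E1 E2.
Qed.
End Abs.
Section Conc.
Variable C : numClosedFieldType.

Lemma rho0_zero k : rho C 0 k = 0.
Proof.
apply/matrixP => i j; rewrite (ord1 i) (ord1 j) /rho.
case: ifP => _; [|case: ifP => _]; rewrite !mxE /= ?mulr0 // mul0r subr0 mulr0 //.
Qed.

Lemma dimK_gt0 N : (0 < dimK N)%N.
Proof. by rewrite /dimK big_ord_recl. Qed.

Variable N : nat.
Definition i0 : 'I_(dimK N) := Ordinal (dimK_gt0 N).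

Lemma Xrow0 k j : Xop C N k i0 j = 0.
Proof.
rewrite /Xop mxdiag_recl castmxE.
have -> : cast_ord (esym mxsize_recl) i0 = lshift _ (ord0 : 'I_1) by apply: val_inj.
case: (splitP (cast_ord (esym mxsize_recl) j)) => j' hj.
  have -> : cast_ord (esym mxsize_recl) j = lshift _ j' by apply: val_inj.
  by rewrite block_mxEul rho0_zero mxE.
have -> : cast_ord (esym mxsize_recl) j = rshift _ j' by apply: val_inj.
by rewrite block_mxEur mxE.
Qed.

Lemma Xcol0 k j : Xop C N k j i0 = 0.
Proof.
rewrite /Xop mxdiag_recl castmxE.
have -> : cast_ord (esym mxsize_recl) i0 = lshift _ (ord0 : 'I_1) by apply: val_inj.
case: (splitP (cast_ord (esym mxsize_recl) j)) => j' hj.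
  have -> : cast_ord (esym mxsize_recl) j = lshift _ j' by apply: val_inj.
  by rewrite block_mxEul rho0_zero mxE.
have -> : cast_ord (esym mxsize_recl) j = rshift _ j' by apply: val_inj.
by rewrite block_mxEdl mxE.
Qed.

Lemma trZZ n : \tr (spin_z C n *m spin_z C n) =
   \sum_(a < n.+1) (n%:R / 2%:R - (a:nat)%:R) ^+ 2.
Proof.
apply: eq_bigr => a _; rewrite mxE.
have -> : \sum_l spin_z C n a l * spin_z C n l a = \sum_(l < n.+1) (if (l:nat) == a then
   (n%:R / 2%:R - (a:nat)%:R) ^+ 2 else 0).
  apply: eq_bigr => l _; rewrite !mxE; case: (eqVneq (l:nat) a) => [/val_inj ->|h].
    by rewrite !eqxx expr2.
  have h' : (a == l) = false by apply/negbTE; rewrite -val_eqE eq_sym.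
  by rewrite h' mul0r.
by rewrite sum_if_eqc ltn_ord.
Qed.

Lemma trX2sq : \tr (Xop C N k2 *m Xop C N k2) =
  - \sum_(n < N.+1) \sum_(a < n.+1) ((n:nat)%:R / 2%:R - (a:nat)%:R) ^+ 2.
Proof.
rewrite /Xop mul_mxdiag mxtrace_mxdiag -sumrN; apply: eq_bigr => n _.
rewrite rho2E -scalemxAl -scalemxAr scalerA mxtraceZ mulrNN hi mulN1r trZZ //.
Qed.

Lemma trX2sq_neq0 : (1 <= N)%N -> \tr (Xop C N k2 *m Xop C N k2) != 0.
Proof.
move=> hN; rewrite trX2sq oppr_eq0; apply/eqP => hS.
have hre : forall (n a : nat), 0 <= (n%:R / 2%:R - a%:R) ^+ 2 :> C.
  move=> n a; apply: real_exprn_even_ge0 => //.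
  by rewrite rpredB ?rpredM ?rpredV ?realn.
have := psumr_eq0P _ hS.
move=> /(_ (fun (n : 'I_N.+1) _ => sumr_ge0 _ (fun (a : 'I_n.+1) _ => hre n a))).
move=> /(_ (Ordinal (hN : (1 < N.+1)%N)) isT) /= h1.
have := @psumr_eq0P _ _ _ _ (fun (a : 'I_2) _ => hre 1%N a) h1 ord0 isT.
move/eqP; rewrite subr0 sqrf_eq0 mul1r invr_eq0 pnatr_eq0 //.
Qed.
End Conc.

Section Sig.
Variable C : numClosedFieldType.
Local Notation s := (sigma C).
Local Notation ii := ('i : C).

Ltac sgsimp := rewrite ?(mulr0, mul0r, addr0, add0r, mulr1, mul1r, mulrN, mulNr, opprK, hi, mulN1r, mulrN1, oppr0).

Ltac sgtac := apply/matrixP;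
  case => [[|[|?]] ?] //; case => [[|[|?]] ?] //;
  rewrite !mxE !big_ord_recl big_ord0 !mxE /=; sgsimp => //.

Lemma s00 : s k0 *m s k0 = - 1%:M. Proof. sgtac. Qed.
Lemma s11 : s k1 *m s k1 = - 1%:M. Proof. sgtac. Qed.
Lemma s22 : s k2 *m s k2 = - 1%:M. Proof. sgtac. Qed.
Lemma s01 : s k0 *m s k1 = - s k2. Proof. sgtac. Qed.
Lemma s10 : s k1 *m s k0 = s k2. Proof. sgtac. Qed.
Lemma s12 : s k1 *m s k2 = - s k0. Proof. sgtac. Qed.
Lemma s21 : s k2 *m s k1 = s k0. Proof. sgtac. Qed.
Lemma s20 : s k2 *m s k0 = - s k1. Proof. sgtac. Qed.
Lemma s02 : s k0 *m s k2 = s k1. Proof. sgtac. Qed.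
End Sig.

Lemma zsub3 (V : zmodType) (x y z : V) : x - (y - z) = x - y + z.
Proof. by rewrite opprB addrCA addrC. Qed.

Section Tens.
Variable C : numClosedFieldType.

Lemma tensmxDl m n p q (A B : 'M[C]_(m,n)) (S : 'M[C]_(p,q)) :
  (A + B) *t S = A *t S + B *t S.
Proof. by apply/matrixP => i j; rewrite !mxE mulrDl. Qed.
Lemma tensmxNl m n p q (A : 'M[C]_(m,n)) (S : 'M[C]_(p,q)) :
  (- A) *t S = - (A *t S).
Proof. by apply/matrixP => i j; rewrite !mxE mulNr. Qed.
Lemma tensmxBl m n p q (A B : 'M[C]_(m,n)) (S : 'M[C]_(p,q)) :
  (A - B) *t S = A *t S - B *t S.
Proof. by rewrite tensmxDl tensmxNl. Qed.
Lemma tensmxZl m n p q (c : C) (A : 'M[C]_(m,n)) (S : 'M[C]_(p,q)) :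
  (c *: A) *t S = c *: (A *t S).
Proof. by apply/matrixP => i j; rewrite !mxE mulrA. Qed.
Lemma tensmxNr m n p q (A : 'M[C]_(m,n)) (S : 'M[C]_(p,q)) :
  A *t (- S) = - (A *t S).
Proof. by apply/matrixP => i j; rewrite !mxE mulrN. Qed.
Lemma tensmx_suml m n p q (I : finType) (F : I -> 'M[C]_(m,n)) (S : 'M[C]_(p,q)) :
  (\sum_i F i) *t S = \sum_i (F i *t S).
Proof.
apply: (big_morph (fun A => A *t S)); first by move=> A B; rewrite tensmxDl.
exact: tens0mx.
Qed.

Lemma sum3 (V : nmodType) (F : 'I_3 -> V) : \sum_(k < 3) F k = F k0 + F k1 + F k2.
Proof.
rewrite !big_ord_recl big_ord0 addr0 addrA.
by congr (F _ + F _ + F _); apply: val_inj.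
Qed.
End Tens.

Section BHsec.
Variable C : numClosedFieldType.
Variable d : nat.
Variable X : 'I_3 -> 'M[C]_d.
Hypothesis XLie01 : X k0 *m X k1 - X k1 *m X k0 = X k2.
Hypothesis XLie12 : X k1 *m X k2 - X k2 *m X k1 = X k0.
Hypothesis XLie20 : X k2 *m X k0 - X k0 *m X k2 = X k1.
Local Notation s := (sigma C).
Local Notation BH := ('M[C]_(d * 2)).
Definition em (a : 'M[C]_d) : BH := a *t (1%:M : 'M[C]_2).
Definition DD : BH := \sum_(k < 3) (X k *t sigma C k).
Fact cD_key : unit. Proof. exact: tt. Qed.
Definition cD := locked_with cD_key (fun a : 'M[C]_d => DD *m em a - em a *m DD : BH).
Lemma cD_unlock a : cD a = DD *m em a - em a *m DD.
Proof. by rewrite /cD unlock. Qed.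

Definition dl (k : 'I_3) (a : 'M[C]_d) := X k *m a - a *m X k.

Lemma em_mul (a b : 'M[C]_d) : em a *m em b = em (a *m b) :> BH.
Proof. by rewrite /em tensmx_mul mulmx1. Qed.

Lemma em1 : em (1%:M) = 1%:M :> BH.
Proof.
apply/matrixP => x y.
case: (mxtens_indexP x) => i r; case: (mxtens_indexP y) => j t.
rewrite /em tensmxE !mxE -natrM mulnb.
by rewrite (inj_eq (can_inj (@mxtens_indexK _ _))) xpair_eqE.
Qed.

Lemma cDE (a : 'M[C]_d) : cD a = \sum_k (dl k a *t s k).
Proof.
rewrite cD_unlock /DD /em mulmx_suml mulmx_sumr -sumrB; apply: eq_bigr => k _.
by rewrite !tensmx_mul mulmx1 mul1mx tensmxBl.
Qed.

Lemma cD_mul (a b : 'M[C]_d) : cD (a *m b) = cD a *m em b + em a *m cD b.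
Proof.
rewrite !cD_unlock -!em_mul mulmxBl mulmxBr !mulmxA.
by rewrite addrA subrK.
Qed.

Lemma emDD (c a b : 'M[C]_d) : em c *m cD a *m cD b =
  \sum_k \sum_l ((c *m dl k a *m dl l b) *t (s k *m s l)).
Proof.
rewrite cDE mulmx_sumr mulmx_suml; apply: eq_bigr => k _.
rewrite cDE mulmx_sumr; apply: eq_bigr => l _.
by rewrite /em !tensmx_mul mul1mx.
Qed.

Definition cmb (P Q0 Q1 Q2 : 'M[C]_d) : BH :=
  P *t 1%:M + Q0 *t s k0 + Q1 *t s k1 + Q2 *t s k2.

Lemma prod_decomp (Y : 'I_3 -> 'I_3 -> 'M[C]_d) :
  \sum_k \sum_l (Y k l *t (s k *m s l)) =
  cmb (- (Y k0 k0 + Y k1 k1 + Y k2 k2)) (Y k2 k1 - Y k1 k2)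
      (Y k0 k2 - Y k2 k0) (Y k1 k0 - Y k0 k1).
Proof.
rewrite !sum3 s00 s01 s02 s10 s11 s12 s20 s21 s22 /cmb.
apply/matrixP => x y.
case: (mxtens_indexP x) => i r; case: (mxtens_indexP y) => j t.
rewrite !mxE !mxtens_indexK /=; ring.
Qed.

Definition o0 : 'I_2 := @Ordinal 2 0 isT.
Definition o1 : 'I_2 := @Ordinal 2 1 isT.

Lemma cmb_entry P Q0 Q1 Q2 i j r t :
  cmb P Q0 Q1 Q2 (mxtens_index (i, r)) (mxtens_index (j, t)) =
  P i j * (1%:M : 'M[C]_2) r t + Q0 i j * s k0 r t + Q1 i j * s k1 r t + Q2 i j * s k2 r t.
Proof. by rewrite /cmb !mxE !mxtens_indexK. Qed.

Lemma cmb0 P Q0 Q1 Q2 : cmb P Q0 Q1 Q2 = 0 ->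
  [/\ P = 0, Q0 = 0, Q1 = 0 & Q2 = 0].
Proof.
move=> H.
have E : forall i j r t, P i j * (1%:M : 'M[C]_2) r t + Q0 i j * s k0 r t
   + Q1 i j * s k1 r t + Q2 i j * s k2 r t = 0.
  by move=> i j r t; rewrite -cmb_entry H mxE.
have two : (2%:R : C) != 0 by rewrite pnatr_eq0.
have iz : ('i : C) != 0 by rewrite neq0Ci.
have key : forall i j, [/\ P i j = 0, Q0 i j = 0, Q1 i j = 0 & Q2 i j = 0].
  move=> i j.
  have e00 := E i j o0 o0; have e11 := E i j o1 o1.
  have e01 := E i j o0 o1; have e10 := E i j o1 o0.
  rewrite !mxE /= in e00 e11 e01 e10.
  rewrite ?(mulr0, mul0r, addr0, add0r, mulr1, mul1r, mulrN, mulNr, opprK, hi, mulN1r, mulrN1, oppr0) in e00 e11 e01 e10.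
  have h1 : P i j * 2%:R = (P i j + Q2 i j * 'i) + (P i j - Q2 i j * 'i) by ring.
  have h2 : Q2 i j * ('i * 2%:R) = (P i j + Q2 i j * 'i) - (P i j - Q2 i j * 'i) by ring.
  have h3 : Q0 i j * ('i * 2%:R) = (Q0 i j * 'i + Q1 i j) + (Q0 i j * 'i - Q1 i j) by ring.
  have h4 : Q1 i j * 2%:R = (Q0 i j * 'i + Q1 i j) - (Q0 i j * 'i - Q1 i j) by ring.
  rewrite e00 e11 e01 e10 ?addr0 ?subr0 in h1 h2 h3 h4.
  move: h1 h2 h3 h4 => /eqP h1 /eqP h2 /eqP h3 /eqP h4.
  rewrite !mulf_eq0 (negPf two) (negPf iz) !orbF in h1 h2 h3 h4.
  by split; apply/eqP.
split; apply/matrixP => i j; rewrite mxE; by case: (key i j).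
Qed.

Lemma dl_mul k (a b : 'M[C]_d) : dl k (a *m b) = dl k a *m b + a *m dl k b.
Proof. by rewrite /dl mulmxBl mulmxBr !mulmxA addrA subrK. Qed.

Lemma dl_sum k (I : finType) (F : I -> 'M[C]_d) : dl k (\sum_i F i) = \sum_i dl k (F i).
Proof. by rewrite /dl mulmx_sumr mulmx_suml -sumrB. Qed.

Lemma dl0 k : dl k 0 = 0.
Proof. by rewrite /dl mulmx0 mul0mx subrr. Qed.

Lemma jac_gen (A B D b : 'M[C]_d) : A *m B - B *m A = D ->
  (A *m (B *m b - b *m B) - (B *m b - b *m B) *m A) -
  (B *m (A *m b - b *m A) - (A *m b - b *m A) *m B) = D *m b - b *m D.
Proof.
move=> <-; rewrite !(mulmxBl, mulmxBr) !mulmxA.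
move: (A *m B *m b) (A *m b *m B) (B *m b *m A) (b *m B *m A) (B *m A *m b) (b *m A *m B).
move=> t1 t2 t3 t4 t5 t6; apply/matrixP => i j; rewrite !mxE; ring.
Qed.

Lemma jac01 b : dl k0 (dl k1 b) - dl k1 (dl k0 b) = dl k2 b.
Proof. rewrite /dl; apply: jac_gen; exact: XLie01. Qed.
Lemma jac12 b : dl k1 (dl k2 b) - dl k2 (dl k1 b) = dl k0 b.
Proof. rewrite /dl; apply: jac_gen; exact: XLie12. Qed.
Lemma jac20 b : dl k2 (dl k0 b) - dl k0 (dl k2 b) = dl k1 b.
Proof. rewrite /dl; apply: jac_gen; exact: XLie20. Qed.

Lemma ord3P (k : 'I_3) : k = k0 \/ k = k1 \/ k = k2.
Proof.
case: k => [[|[|[|k]]] hk].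
- by left; apply: val_inj.
- by right; left; apply: val_inj.
- by right; right; apply: val_inj.
- by exfalso; move: hk; rewrite !ltnS ltn0.
Qed.

Lemma junk_ext m (a b : 'I_m -> 'M[C]_d) :
  \sum_i em (a i) *m cD (b i) = 0 -> forall k, \sum_i a i *m dl k (b i) = 0.
Proof.
move=> H.
have E : \sum_i em (a i) *m cD (b i) =
   cmb 0 (\sum_i a i *m dl k0 (b i)) (\sum_i a i *m dl k1 (b i)) (\sum_i a i *m dl k2 (b i)).
  rewrite /cmb tens0mx add0r [X in _ = X + _ + _]tensmx_suml [X in _ = _ + X + _]tensmx_suml.
  rewrite [X in _ = _ + X]tensmx_suml -big_split -big_split; apply: eq_bigr => i _.
  by rewrite cDE mulmx_sumr sum3 /em !tensmx_mul !mul1mx.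
rewrite E in H; case: (cmb0 H) => _ h0 h1 h2 k.
case: (ord3P k) => [->|[->|->]]; [exact: h0|exact: h1|exact: h2].
Qed.

Definition Lap (b : 'M[C]_d) := dl k0 (dl k0 b) + dl k1 (dl k1 b) + dl k2 (dl k2 b).

Lemma junk_form m (a b : 'I_m -> 'M[C]_d) :
  \sum_i em (a i) *m cD (b i) = 0 ->
  \sum_i cD (a i) *m cD (b i) = (\sum_i a i *m Lap (b i)) *t 1%:M.
Proof.
move=> H; have HT := junk_ext H.
have YR : forall k l, \sum_i dl k (a i) *m dl l (b i) = - \sum_i a i *m dl k (dl l (b i)).
  move=> k l.
  have -> : \sum_i dl k (a i) *m dl l (b i) =
     \sum_i (dl k (a i *m dl l (b i)) - a i *m dl k (dl l (b i))).
    by apply: eq_bigr => i _; rewrite dl_mul addrK.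
  by rewrite sumrB -(dl_sum k (fun i => a i *m dl l (b i))) (HT l) dl0 add0r.
have E : \sum_i cD (a i) *m cD (b i) = \sum_k \sum_l
    ((\sum_i dl k (a i) *m dl l (b i)) *t (sigma C k *m sigma C l)).
  have -> : \sum_i cD (a i) *m cD (b i) =
      \sum_i em 1%:M *m cD (a i) *m cD (b i).
    by apply: eq_bigr => i _; rewrite em1 mul1mx.
  under eq_bigr do rewrite emDD.
  rewrite exchange_big; apply: eq_bigr => k _.
  rewrite exchange_big; apply: eq_bigr => l _.
  rewrite tensmx_suml; apply: eq_bigr => i _; by rewrite mul1mx.
rewrite [LHS]E (prod_decomp (fun k l => \sum_i dl k (a i) *m dl l (b i))); cbv beta.
rewrite (YR k0 k0) (YR k1 k1) (YR k2 k2) (YR k2 k1) (YR k1 k2) (YR k0 k2) (YR k2 k0) (YR k1 k0) (YR k0 k1).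
have Q0 : - (\sum_i a i *m dl k2 (dl k1 (b i))) - - (\sum_i a i *m dl k1 (dl k2 (b i))) = 0.
  rewrite opprK addrC -sumrB.
  under eq_bigr do rewrite -mulmxBr jac12.
  exact: HT.
have Q1 : - (\sum_i a i *m dl k0 (dl k2 (b i))) - - (\sum_i a i *m dl k2 (dl k0 (b i))) = 0.
  rewrite opprK addrC -sumrB.
  under eq_bigr do rewrite -mulmxBr jac20.
  exact: HT.
have Q2 : - (\sum_i a i *m dl k1 (dl k0 (b i))) - - (\sum_i a i *m dl k0 (dl k1 (b i))) = 0.
  rewrite opprK addrC -sumrB.
  under eq_bigr do rewrite -mulmxBr jac01.
  exact: HT.
rewrite Q0 Q1 Q2 /cmb !tens0mx !addr0 !opprD !opprK -!big_split.
congr (_ *t _); apply: eq_bigr => i _; rewrite /Lap !mulmxDr.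
by [].
Qed.

Definition inS (M : BH) : Prop :=
  exists (m : nat) (a0 a1 a2 : 'I_m -> 'M[C]_d),
    M = \sum_(i < m) (em (a0 i) *m cD (a1 i) *m cD (a2 i)).
Definition inJ2 (M : BH) : Prop :=
  exists (m : nat) (a b : 'I_m -> 'M[C]_d),
    \sum_(i < m) (em (a i) *m cD (b i)) = 0 /\
    M = \sum_(i < m) (cD (a i) *m cD (b i)).
Definition inV (M : BH) : Prop :=
  exists X Y Z : 'M[C]_d,
    M = X *t (sigma C k0 *m sigma C k1) + Y *t (sigma C k1 *m sigma C k2)
        + Z *t (sigma C k0 *m sigma C k2).

Definition catf (T : Type) m1 m2 (f1 : 'I_m1 -> T) (f2 : 'I_m2 -> T) (i : 'I_(m1 + m2)) : T :=
  match split i with inl j => f1 j | inr j => f2 j end.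

Lemma catfL T m1 m2 (f1 : 'I_m1 -> T) (f2 : 'I_m2 -> T) i : catf f1 f2 (lshift m2 i) = f1 i.
Proof. by rewrite /catf; move: (unsplitK (inl i : 'I_m1 + 'I_m2)) => /= ->. Qed.
Lemma catfR T m1 m2 (f1 : 'I_m1 -> T) (f2 : 'I_m2 -> T) i : catf f1 f2 (rshift m1 i) = f2 i.
Proof. by rewrite /catf; move: (unsplitK (inr i : 'I_m1 + 'I_m2)) => /= ->. Qed.

Lemma inS0 : inS 0.
Proof. by exists 0%N, (fun _ => 0), (fun _ => 0), (fun _ => 0); rewrite big_ord0. Qed.

Lemma inS_add M1 M2 : inS M1 -> inS M2 -> inS (M1 + M2).
Proof.
move=> [m1 [a0 [a1 [a2 ->]]]] [m2 [b0 [b1 [b2 ->]]]].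
exists (m1 + m2)%N, (catf a0 b0), (catf a1 b1), (catf a2 b2).
by rewrite big_split_ord; congr (_ + _); apply: eq_bigr => i _; rewrite ?catfL ?catfR.
Qed.

Lemma inS_sum (I : finType) (F : I -> BH) : (forall i, inS (F i)) -> inS (\sum_i F i).
Proof. by move=> h; apply: big_ind => //; [exact: inS0 | exact: inS_add]. Qed.

Lemma em_scale c a : em (c *: a) = c *: em a.
Proof. exact: tensmxZl. Qed.

Lemma inS_scale c M : inS M -> inS (c *: M).
Proof.
move=> [m [a0 [a1 [a2 ->]]]]; exists m, (fun i => c *: a0 i), a1, a2.
by rewrite scaler_sumr; apply: eq_bigr => i _; rewrite em_scale -!scalemxAl.
Qed.

Lemma inS_opp M : inS M -> inS (- M).
Proof. by move=> h; rewrite -scaleN1r; exact: inS_scale. Qed.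

Lemma inS_gen c a b : inS (em c *m cD a *m cD b).
Proof.
exists 1%N, (fun _ => c), (fun _ => a), (fun _ => b).
by rewrite big_ord1.
Qed.

Lemma right_id a0 a1 a2 c :
  em a0 *m cD a1 *m cD a2 *m em c =
  em a0 *m cD a1 *m cD (a2 *m c) - em a0 *m cD (a1 *m a2) *m cD c
  + em (a0 *m a1) *m cD a2 *m cD c.
Proof.
have h1 : cD a2 *m em c = cD (a2 *m c) - em a2 *m cD c by rewrite cD_mul addrK.
have h2 : cD a1 *m em a2 = cD (a1 *m a2) - em a1 *m cD a2 by rewrite cD_mul addrK.
rewrite -(mulmxA _ (cD a2) (em c)) h1 mulmxBr.
rewrite (mulmxA (em a0 *m cD a1) (em a2)) -(mulmxA (em a0) (cD a1) (em a2)) h2.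
rewrite [em a0 *m (_ - _)]mulmxBr [(_ - _) *m cD c]mulmxBl !mulmxA em_mul.
exact: zsub3.
Qed.

Lemma inS_sub M1 M2 : inS M1 -> inS M2 -> inS (M1 - M2).
Proof. by move=> h1 h2; apply: inS_add => //; exact: inS_opp. Qed.

Lemma inS_right M c : inS M -> inS (M *m em c).
Proof.
move=> [m [a0 [a1 [a2 ->]]]]; rewrite mulmx_suml; apply: inS_sum => i.
rewrite right_id; apply: inS_add; last exact: inS_gen.
by apply: inS_sub; exact: inS_gen.
Qed.

Lemma inS_left M c : inS M -> inS (em c *m M).
Proof.
move=> [m [a0 [a1 [a2 ->]]]]; rewrite mulmx_sumr.
exists m, (fun i => c *m a0 i), a1, a2; apply: eq_bigr => i _.
by rewrite !mulmxA em_mul.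
Qed.

Lemma inJ2_inS M : inJ2 M -> inS M.
Proof.
move=> [m [a [b [_ ->]]]]; exists m, (fun _ => 1%:M), a, b.
by apply: eq_bigr => i _; rewrite em1 mul1mx.
Qed.

Lemma inJ20 : inJ2 0.
Proof. by exists 0%N, (fun _ => 0), (fun _ => 0); rewrite !big_ord0. Qed.

Lemma sum_cat2 (G : 'M[C]_d -> 'M[C]_d -> BH) m1 m2 (a b : 'I_m1 -> 'M[C]_d)
   (a' b' : 'I_m2 -> 'M[C]_d) :
  \sum_(i < m1 + m2) G (catf a a' i) (catf b b' i) =
  \sum_(i < m1) G (a i) (b i) + \sum_(i < m2) G (a' i) (b' i).
Proof.
by rewrite big_split_ord; congr (_ + _); apply: eq_bigr => i _; rewrite ?catfL ?catfR.
Qed.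

Lemma inJ2_add M1 M2 : inJ2 M1 -> inJ2 M2 -> inJ2 (M1 + M2).
Proof.
move=> [m1 [a [b [h1 ->]]]] [m2 [a' [b' [h2 ->]]]].
exists (m1 + m2)%N, (catf a a'), (catf b b'); split.
  by rewrite (sum_cat2 (fun x y => em x *m cD y)) h1 h2 addr0.
by rewrite (sum_cat2 (fun x y => cD x *m cD y)).
Qed.

Lemma inJ2_sum (I : finType) (F : I -> BH) : (forall i, inJ2 (F i)) -> inJ2 (\sum_i F i).
Proof. by move=> h; apply: big_ind => //; [exact: inJ20 | exact: inJ2_add]. Qed.

Lemma cD_scale c a : cD (c *: a) = c *: cD a.
Proof. by rewrite !cD_unlock em_scale scalerBr -scalemxAl -scalemxAr. Qed.

Lemma inJ2_scale c M : inJ2 M -> inJ2 (c *: M).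
Proof.
move=> [m [a [b [h ->]]]]; exists m, a, (fun i => c *: b i); split.
  rewrite (eq_bigr (fun i => c *: (em (a i) *m cD (b i)))); last first.
    by move=> i _; rewrite cD_scale scalemxAr.
  by rewrite -scaler_sumr h scaler0.
by rewrite scaler_sumr; apply: eq_bigr => i _; rewrite cD_scale scalemxAr.
Qed.

Lemma emcD a b : em a *m cD b = \sum_k ((a *m dl k b) *t s k).
Proof. by rewrite cDE mulmx_sumr; apply: eq_bigr => k _; rewrite /em tensmx_mul mul1mx. Qed.

Lemma dXd (p r t q : 'I_d) (Y : 'M[C]_d) :
  delta_mx p r *m Y *m delta_mx t q = Y r t *: delta_mx p q.
Proof.
apply/matrixP => i j; rewrite mxE (bigD1 t) //= big1 => [|l lt]; last first.
  by rewrite [delta_mx t q l j]mxE (negPf lt) mulr0.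
rewrite addr0 [delta_mx t q t j]mxE eqxx /= [(delta_mx p r *m Y) i t]mxE (bigD1 r) //= big1 => [|x xr]; last first.
  by rewrite [delta_mx p r i x]mxE (negPf xr) andbF mul0r.
rewrite !mxE eqxx andbT addr0.
by case: (i == p); case: (j == q); rewrite ?mul1r ?mulr1 ?mul0r ?mulr0.
Qed.

Lemma famYW (p q : 'I_d) (Y W : 'M[C]_d) :
  \sum_r (delta_mx p r *m (Y *m delta_mx r q *m W)) = \tr Y *: (delta_mx p q *m W).
Proof.
rewrite /mxtrace scaler_suml; apply: eq_bigr => r _.
by rewrite !mulmxA dXd -scalemxAl.
Qed.

Variable i0 : 'I_d.
Hypothesis Xrow : forall k j, X k i0 j = 0.
Hypothesis Xcol : forall k j, X k j i0 = 0.

Definition fa (p : 'I_d) : 'I_(d + 1) -> 'M[C]_d :=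
  catf (fun r : 'I_d => delta_mx p r) (fun _ : 'I_1 => - d%:R *: delta_mx p i0).
Definition fb (q : 'I_d) : 'I_(d + 1) -> 'M[C]_d :=
  catf (fun r : 'I_d => delta_mx r q) (fun _ : 'I_1 => delta_mx i0 q).

Lemma famS (p q : 'I_d) (Y W : 'M[C]_d) :
  \sum_(i < d + 1) (fa p i *m (Y *m fb q i *m W)) =
  (\tr Y - d%:R * Y i0 i0) *: (delta_mx p q *m W).
Proof.
rewrite big_split_ord big_ord1.
rewrite (eq_bigr (fun r => delta_mx p r *m (Y *m delta_mx r q *m W))); last first.
  by move=> r _; rewrite /fa /fb !catfL.
rewrite famYW /fa /fb !catfR -scalemxAl !mulmxA dXd -scalemxAl.
by rewrite scalerA /= -scalerDl mulNr.
Qed.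

Lemma dlE k (b : 'M[C]_d) : dl k b = X k *m b *m 1%:M - 1%:M *m b *m X k.
Proof. by rewrite /dl mulmx1 mul1mx. Qed.

Lemma ddlE k (b : 'M[C]_d) : dl k (dl k b) =
  (X k *m X k) *m b *m 1%:M - X k *m b *m X k - X k *m b *m X k + 1%:M *m b *m (X k *m X k).
Proof.
rewrite /dl mulmxBr mulmxBl !mulmxA mulmx1 mul1mx.
exact: zsub3.
Qed.

Lemma trX k : \tr (X k) = 0.
Proof.
case: (ord3P k) => [->|[->|->]]; [rewrite -XLie12 | rewrite -XLie20 | rewrite -XLie01]; exact: trcomm.
Qed.

Lemma XX00 k : (X k *m X k) i0 i0 = 0.
Proof. by rewrite mxE big1 // => j _; rewrite Xrow mul0r. Qed.

Lemma one00 : (1%:M : 'M[C]_d) i0 i0 = 1.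
Proof. by rewrite mxE eqxx. Qed.

Lemma fam_junk p q : \sum_i em (fa p i) *m cD (fb q i) = 0.
Proof.
under eq_bigr do rewrite emcD.
rewrite exchange_big; apply: big1 => k _; rewrite -tensmx_suml.
have -> : \sum_i fa p i *m dl k (fb q i) = 0.
  under eq_bigr do rewrite dlE mulmxBr.
  rewrite sumrB !famS trX Xrow mulr0 subr0 scale0r mxtrace1 one00 mulr1 subrr scale0r.
  by rewrite subrr.
by rewrite tens0mx.
Qed.

Lemma fam_ddl p q k : \sum_i fa p i *m dl k (dl k (fb q i)) = \tr (X k *m X k) *: delta_mx p q.
Proof.
rewrite (eq_bigr (fun i => fa p i *m (X k *m X k *m fb q i *m 1%:M) - fa p i *m (X k *m fb q i *m X k)
   - fa p i *m (X k *m fb q i *m X k) + fa p i *m (1%:M *m fb q i *m (X k *m X k)))); last first.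
  by move=> i _; rewrite ddlE !mulmxDr !mulmxN.
rewrite big_split /= !sumrB !famS trX Xrow XX00 mxtrace1 one00 !mulr0 !subr0 mulr1 subrr.
by rewrite !scale0r !subr0 addr0 mulmx1.
Qed.

Lemma fam_val p q : \sum_i cD (fa p i) *m cD (fb q i) =
   ((\tr (X k0 *m X k0) + \tr (X k1 *m X k1) + \tr (X k2 *m X k2)) *: delta_mx p q) *t 1%:M.
Proof.
rewrite junk_form; last exact: fam_junk.
congr (_ *t _).
rewrite (eq_bigr (fun i => fa p i *m dl k0 (dl k0 (fb q i)) + fa p i *m dl k1 (dl k1 (fb q i))
   + fa p i *m dl k2 (dl k2 (fb q i)))); last by move=> i _; rewrite /Lap !mulmxDr.
by rewrite !big_split /= !fam_ddl !scalerDl.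
Qed.

Hypothesis trsq : \tr (X k2 *m X k2) != 0.

Lemma cas_neq0 : \tr (X k0 *m X k0) + \tr (X k1 *m X k1) + \tr (X k2 *m X k2) != 0.
Proof.
have [e0 e1] := tr_sq_eq_abs XLie01 XLie12 XLie20.
rewrite e0 e1 -mulr2n -mulrSr -mulr_natl mulf_eq0 negb_or trsq andbT.
by rewrite pnatr_eq0.
Qed.

Lemma inJ2_tens1 P : inJ2 (P *t 1%:M).
Proof.
have cn := cas_neq0.
set c := _ + _ + _ in cn.
rewrite {1}(matrix_sum_delta P) tensmx_suml; apply: inJ2_sum => p.
rewrite tensmx_suml; apply: inJ2_sum => q.
have -> : (P p q *: delta_mx p q) *t (1%:M : 'M[C]_2) = (P p q / c) *: ((c *: delta_mx p q) *t (1%:M : 'M[C]_2)).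
  by rewrite !tensmxZl scalerA divfK.
apply: inJ2_scale; exists (d + 1)%N, (fa p), (fb q); split; first exact: fam_junk.
by rewrite fam_val.
Qed.

Lemma cDsq_gen (A : 'M[C]_d) : cD A *m cD A = cmb
   (- (dl k0 A *m dl k0 A + dl k1 A *m dl k1 A + dl k2 A *m dl k2 A))
   (dl k2 A *m dl k1 A - dl k1 A *m dl k2 A)
   (dl k0 A *m dl k2 A - dl k2 A *m dl k0 A)
   (dl k1 A *m dl k0 A - dl k0 A *m dl k1 A).
Proof.
rewrite -[cD A *m _]mul1mx mulmxA -em1 emDD.
rewrite (eq_bigr (fun k => \sum_l ((dl k A *m dl l A) *t (s k *m s l)))); last first.
  by move=> k _; apply: eq_bigr => l _; rewrite mul1mx.
exact: (prod_decomp (fun k l => dl k A *m dl l A)).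
Qed.

Lemma dl00 : dl k0 (X k0) = 0. Proof. exact: subrr. Qed.
Lemma dl11 : dl k1 (X k1) = 0. Proof. exact: subrr. Qed.
Lemma dl22 : dl k2 (X k2) = 0. Proof. exact: subrr. Qed.
Lemma dl10 : dl k1 (X k0) = - X k2. Proof. by rewrite -XLie01 opprB. Qed.
Lemma dl20 : dl k2 (X k0) = X k1. Proof. exact: XLie20. Qed.
Lemma dl01 : dl k0 (X k1) = X k2. Proof. exact: XLie01. Qed.
Lemma dl21 : dl k2 (X k1) = - X k0. Proof. by rewrite -XLie12 opprB. Qed.
Lemma dl02 : dl k0 (X k2) = - X k1. Proof. by rewrite -XLie20 opprB. Qed.
Lemma dl12 : dl k1 (X k2) = X k0. Proof. exact: XLie12. Qed.

Lemma inS_Xs0 : inS (X k0 *t s k0).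
Proof.
have h := cDsq_gen (X k0).
rewrite dl00 dl10 dl20 !mulmx0 !mul0mx subrr in h.
have e : X k1 *m - X k2 - - X k2 *m X k1 = - X k0.
  by rewrite mulmxN mulNmx opprK -XLie12 opprB addrC.
rewrite e /cmb !tens0mx !addr0 tensmxNl in h.
set P := (X in X *t 1%:M) in h.
have -> : X k0 *t s k0 = P *t 1%:M - cD (X k0) *m cD (X k0).
  by rewrite h opprD addrA subrr add0r opprK.
apply: inS_sub; first exact: inJ2_inS (inJ2_tens1 _).
by have := inS_gen 1%:M (X k0) (X k0); rewrite em1 mul1mx.
Qed.

Lemma inS_from (A : 'M[C]_d) (S : 'M[C]_2) P :
  cD A *m cD A = P *t 1%:M + (- A) *t S -> inS (A *t S).
Proof.
move=> h; rewrite tensmxNl in h.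
have -> : A *t S = P *t 1%:M - cD A *m cD A.
  by rewrite h opprD addrA subrr add0r opprK.
apply: inS_sub; first exact: inJ2_inS (inJ2_tens1 _).
by have := inS_gen 1%:M A A; rewrite em1 mul1mx.
Qed.

Lemma inS_Xs1 : inS (X k1 *t s k1).
Proof.
have h := cDsq_gen (X k1).
rewrite dl01 dl11 dl21 !mulmx0 !mul0mx !subrr in h.
have e : X k2 *m - X k0 - - X k0 *m X k2 = - X k1.
  by rewrite mulmxN mulNmx opprK -XLie20 opprB addrC.
rewrite e /cmb !tens0mx addr0 addr0 in h.
exact: inS_from h.
Qed.

Lemma inS_Xs2 : inS (X k2 *t s k2).
Proof.
have h := cDsq_gen (X k2).
rewrite dl02 dl12 dl22 !mulmx0 !mul0mx !subrr in h.
have e : X k0 *m - X k1 - - X k1 *m X k0 = - X k2.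
  by rewrite mulmxN mulNmx opprK -XLie01 opprB addrC.
rewrite e /cmb !tens0mx addr0 addr0 in h.
exact: inS_from h.
Qed.

Lemma X_neq0 m : X m != 0.
Proof.
have [e0 e1] := tr_sq_eq_abs XLie01 XLie12 XLie20.
have h : \tr (X m *m X m) != 0.
  by case: (ord3P m) => [->|[->|->]]; rewrite ?e0 ?e1.
by apply: contraNneq h => ->; rewrite mulmx0 mxtrace0.
Qed.

Lemma inS_Qs (m : 'I_3) (Q : 'M[C]_d) : inS (X m *t s m) -> inS (Q *t s m).
Proof.
move=> hX.
case: (pickP (fun uv : 'I_d * 'I_d => X m uv.1 uv.2 != 0)) => [[u v] /= huv|h0]; last first.
  have : X m = 0 by apply/matrixP => i j; have := h0 (i, j); rewrite /= mxE => /negbFE/eqP.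
  by move/eqP; rewrite (negPf (X_neq0 m)).
rewrite (matrix_sum_delta Q) tensmx_suml; apply: inS_sum => p.
rewrite tensmx_suml; apply: inS_sum => q.
have -> : (Q p q *: delta_mx p q) *t s m =
   (Q p q / X m u v) *: (em (delta_mx p u) *m (X m *t s m) *m em (delta_mx v q)).
  rewrite /em !tensmx_mul mul1mx mulmx1 dXd !tensmxZl scalerA divfK //.
apply: inS_scale; apply: inS_right; exact: inS_left.
Qed.

Lemma inV_inS M : inV M -> inS M.
Proof.
move=> [A [B [D ->]]]; rewrite s01 s12 s02 !tensmxNr.
apply: inS_add; first apply: inS_add; try apply: inS_opp; apply: inS_Qs.
- exact: inS_Xs2.
- exact: inS_Xs0.
- exact: inS_Xs1.
Qed.

Lemma inV_inj M1 M2 : inV M1 -> inV M2 -> inJ2 (M1 - M2) -> M1 = M2.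
Proof.
move=> [A1 [B1 [D1 ->]]] [A2 [B2 [D2 ->]]] [m [a [b [h e]]]].
rewrite junk_form // in e; move: (\sum_i a i *m Lap (b i)) e => P e.
have E : cmb (- P) (B2 - B1) (D1 - D2) (A2 - A1) = 0.
  rewrite -(subrr (P *t (1%:M : 'M[C]_2))) -[X in _ = X - _]e.
  rewrite s01 s12 s02 /cmb; apply/matrixP => x y.
  case: (mxtens_indexP x) => i r; case: (mxtens_indexP y) => j t.
  rewrite !mxE !mxtens_indexK; ring.
case: (cmb0 E) => _ /eqP hB /eqP hD /eqP hA.
move: hB hD hA; rewrite !subr_eq0 => /eqP -> /eqP -> /eqP ->.
by [].
Qed.

Lemma ord2P (r : 'I_2) : r = o0 \/ r = o1.
Proof.
case: r => [[|[|r]] hr].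
- by left; apply: val_inj.
- by right; apply: val_inj.
- by exfalso; move: hr; rewrite !ltnS ltn0.
Qed.

Definition Bl (M : BH) (r t : 'I_2) : 'M[C]_d :=
  \matrix_(i, j) M (mxtens_index (i, r)) (mxtens_index (j, t)).

Lemma decomp (M : BH) : M = cmb (2%:R^-1 *: (Bl M o0 o0 + Bl M o1 o1))
   ((2%:R * 'i)^-1 *: (Bl M o0 o1 + Bl M o1 o0))
   (2%:R^-1 *: (Bl M o0 o1 - Bl M o1 o0))
   ((2%:R * 'i)^-1 *: (Bl M o0 o0 - Bl M o1 o1)).
Proof.
have two : (2%:R : C) != 0 by rewrite pnatr_eq0.
have iz : ('i : C) != 0 by rewrite neq0Ci.
apply/matrixP => x y.
case: (mxtens_indexP x) => i r; case: (mxtens_indexP y) => j t.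
rewrite cmb_entry !mxE.
case: (ord2P r) => ->; case: (ord2P t) => ->; rewrite /= 
  ?(mulr0, mul0r, addr0, add0r, mulr1, mul1r, mulrN, mulNr, opprK, hi, mulN1r, mulrN1, oppr0);
  field; rewrite ?mulf_neq0 //.
Qed.

Lemma surj (M : BH) : exists V J : BH, [/\ inV V, inJ2 J & M = V + J].
Proof.
have [P [Q0 [Q1 [Q2 hM]]]] : exists P Q0 Q1 Q2, M = cmb P Q0 Q1 Q2.
  by do 4 eexists; exact: decomp.
exists ((- Q2) *t (s k0 *m s k1) + (- Q0) *t (s k1 *m s k2) + Q1 *t (s k0 *m s k2)).
exists (P *t 1%:M); split.
- by exists (- Q2), (- Q0), Q1.
- exact: inJ2_tens1.
rewrite hM /cmb s01 s12 s02 !tensmxNl !tensmxNr !opprK.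
apply/matrixP => x y; rewrite !mxE; ring.
Qed.

Theorem main_abs :
  (forall M : BH, inV M -> inS M) /\
  (forall M1 M2 : BH, inV M1 -> inV M2 -> inJ2 (M1 - M2) -> M1 = M2) /\
  (forall M : BH, inS M -> exists V J : BH, [/\ inV V, inJ2 J & M = V + J]).
Proof.
split; first exact: inV_inS.
split; first exact: inV_inj.
by move=> M _; exact: surj.
Qed.
End BHsec.
Section Final.
Variable C : numClosedFieldType.
Variable N : nat.
Local Notation X := (Xop C N).

Lemma commD_cD (a : 'M[C]_(dimK N)) : commD a = cD X a.
Proof. by rewrite cD_unlock. Qed.

Lemma S_iff M : in_S M <-> inS X M.
Proof.
split; move=> [m [a0 [a1 [a2 ->]]]]; exists m, a0, a1, a2; apply: eq_bigr => i _;
  by rewrite !commD_cD.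
Qed.

Lemma J2_iff M : in_J2 M <-> inJ2 X M.
Proof.
split; move=> [m [a [b [h ->]]]]; exists m, a, b; (split; [rewrite -[RHS]h|]);
  by apply: eq_bigr => i _; rewrite !commD_cD.
Qed.

Lemma sg0 : sigma C 0 = sigma C k0. Proof. by []. Qed.
Lemma sg1 : sigma C 1 = sigma C k1. Proof. by []. Qed.
Lemma sg2 : sigma C 2 = sigma C k2. Proof. by []. Qed.

Lemma V_iff (M : BH C N) : in_V M <-> inV M.
Proof. by rewrite /in_V /inV sg0 sg1 sg2. Qed.
End Final.
Arguments V_iff {C N M}.
Arguments S_iff {C N M}.
Arguments J2_iff {C N M}.

Unset Implicit Arguments.

Theorem corollary8p4 (C : numClosedFieldType) (N : nat) (hN : (1 <= N)%N) :
  (forall M : BH C N, in_V M -> in_S M) /\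
  (forall M1 M2 : BH C N, in_V M1 -> in_V M2 -> in_J2 (M1 - M2) -> M1 = M2) /\
  (forall M : BH C N, in_S M -> exists V J : BH C N, [/\ in_V V, in_J2 J & M = V + J]).
Proof.
have [h1 [h2 h3]] := main_abs (XLie01 C N) (XLie12 C N) (XLie20 C N)
   (@Xrow0 C N) (trX2sq_neq0 C hN).
split.
  move=> M hv; apply: (proj2 (@S_iff C N M)); apply: h1.
  exact: (proj1 (@V_iff C N M) hv).
split.
  move=> M1 M2 v1 v2 j; apply: h2.
  - exact: (proj1 (@V_iff C N M1) v1).
  - exact: (proj1 (@V_iff C N M2) v2).
  - exact: (proj1 (@J2_iff C N _) j).
move=> M hs; have [V [J [v j e]]] := h3 M (proj1 (@S_iff C N M) hs).
exists V, J; split.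
- exact: (proj2 (@V_iff C N V) v).
- exact: (proj2 (@J2_iff C N J) j).
- exact: e.
Qed.
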